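(* For all integers $m\ge1$ and $j\ge0$, \[b_{\mathcal{G}}(m,m+j,1)=b_{\mathcal{G}}(m,m+j,\bar1)=q^{\binom{m+1}{2}+\binom{j+1}{2}}{m-1\brack j}.\]
   Context: An overpartition is a partition in which the first occurrence of each part size may be overlined, with parts listed in non-increasing order with respect to $1<\bar1<2<\bar2<\cdots$. A part is of size $t$ if it is $t$ or $\bar t$, and $|\pi|$ is the sum of the sizes of the parts. For $m\ge1$, $\mathcal{G}(m)$ is the set of overpartitions $(\pi_1,\dots,\pi_m)$ such that for every $1\le i<m$, if $\pi_{i+1}$ has size $t$ then $\pi_i\in\{\overline{t+1},\,t+2\}$. $b_{\mathcal{G}}(m,j,1)$ (resp. $b_{\mathcal{G}}(m,j,\bar1)$) is $\sum q^{|\pi|}$ over $\pi\in\mathcal{G}(m)$ whose largest part has size $j$ and whose smallest part is $1$ (resp. $\bar1$). The Gaussian binomial is ${M\brack N}=\frac{(q;q)_M}{(q;q)_N(q;q)_{M-N}}$ for $0\le N\le M$ and $0$ otherwise, where $(q;q)_n=\prod_{i=1}^n(1-q^i)$. *)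

(* Defs.v *)
From HB Require Import structures.
From mathcomp Require Import all_boot all_order all_algebra.
From mathcomp Require Import fraction.
Set Implicit Arguments. Unset Strict Implicit. Unset Printing Implicit Defensive.
Import Order.TTheory GRing.Theory Num.Theory.
Local Open Scope ring_scope.

(* A part of an overpartition: (size t, overlined?).  (t,false) is t,
   (t,true) is \bar t.  Ordering 1 < \bar1 < 2 < \bar2 < ... is by the key 2t+b. *)
Definition part := (nat * bool)%type.
Definition psize (p : part) : nat := p.1.
Definition pover (p : part) : bool := p.2.
Definition pkey (p : part) : nat := (2 * p.1 + p.2)%N.

Definition p0 : part := (0%N, false).

(* An overpartition, listed as (pi_1, ..., pi_k) in non-increasing order w.r.t.
   1 < \bar1 < 2 < \bar2 < ..., all sizes positive, and only the first occurrence
   of a part size may be overlined. *)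
Definition is_overpartition (s : seq part) : bool :=
  [&& all (fun p => 0 < psize p)%N s,
      sorted (fun x y => pkey y <= pkey x)%N s &
      all (fun i => pover (nth p0 s i) ==>
             all (fun k => psize (nth p0 s k) != psize (nth p0 s i)) (iota 0 i))
          (iota 0 (size s))].

Definition weight (s : seq part) : nat := sumn (map psize s).

Definition inG (m : nat) (s : seq part) : bool :=
  [&& is_overpartition s, size s == m &
      all (fun i => let t := psize (nth p0 s i.+1) in
                    (nth p0 s i == (t.+1, true)) || (nth p0 s i == (t.+2, false)))
          (iota 0 (size s).-1)].

Fixpoint seqs_of (A : seq part) (n : nat) : seq (seq part) :=
  if n is n'.+1 then [seq a :: s | a <- A, s <- seqs_of A n'] else [:: [::]].

Definition parts_upto (j : nat) : seq part :=
  [seq (t, b) | t <- iota 0 j.+1, b <- [:: false; true]].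

(* b_G(m, j, c): generating polynomial sum q^{|pi|} over pi in G(m) with largest
   part (pi_1) of size j and smallest part (pi_m) equal to c, where c = (1,false)
   is 1 and c = (1,true) is \bar 1.  Every part of such pi has size <= j, so the
   sum over sequences with entries in parts_upto j covers all of them. *)
Definition bG (m j : nat) (c : part) : {poly rat} :=
  \sum_(s <- seqs_of (parts_upto j) m |
         [&& inG m s, psize (nth p0 s 0) == j & last p0 s == c])
     'X^(weight s).

Notation RF := {fraction {poly rat}}.
Definition toRF (p : {poly rat}) : RF := FracField.tofrac p.

Definition qpoch (n : nat) : {poly rat} := \prod_(1 <= i < n.+1) (1 - 'X^i).

Definition gauss (M N : nat) : RF :=
  if (N <= M)%N then toRF (qpoch M) / toRF (qpoch N * qpoch (M - N)) else 0.

(* Main.v *)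
Require Import Defs.
From HB Require Import structures.
From mathcomp Require Import all_boot all_order all_algebra.
From mathcomp Require Import fraction zify ring.
Import Order.TTheory GRing.Theory Num.Theory.
Local Open Scope ring_scope.

Definition stepR (x y : part) : bool :=
  (x == (y.1.+1, true)) || (x == (y.1.+2, false)).

Lemma chain_sorted (s : seq part) :
  all (fun i => let t := psize (nth p0 s i.+1) in
                    (nth p0 s i == (t.+1, true)) || (nth p0 s i == (t.+2, false)))
          (iota 0 (size s).-1) = sorted stepR s.
Proof.
elim: s => [//|x s IH]; case: s IH => [//|y s] IH.
move: IH; rewrite /= => <-.
by rewrite -[1%N]addn0 iotaDl all_map.
Qed.

Lemma stepR_lt x y : stepR x y -> (y.1 < x.1)%N.
Proof. by case/orP=> /eqP ->. Qed.

Lemma inGE m s : inG m s = [&& all (fun p => 0 < psize p)%N s, sorted stepR s & size s == m].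
Proof.
rewrite /inG /is_overpartition chain_sorted.
case Hs: (sorted stepR s); last by rewrite !andbF.
have Hlt : sorted (fun x y : part => (y.1 < x.1)%N) s.
  by apply: sub_sorted Hs => x y /stepR_lt.
have Hk : sorted (fun x y => pkey y <= pkey x)%N s.
  apply: sub_sorted Hlt => x y; rewrite /pkey; case: x y => [a b] [c d] /= H.
  case: b; case: d; rewrite /= ?addn0 ?addn1; lia.
have Ho : all (fun i => pover (nth p0 s i) ==>
             all (fun k => psize (nth p0 s k) != psize (nth p0 s i)) (iota 0 i))
          (iota 0 (size s)).
  apply/allP => i; rewrite mem_iota add0n => /andP[_ Hi]; apply/implyP => _.
  apply/allP => k; rewrite mem_iota add0n => /andP[_ Hki].
  have := sorted_ltn_nth (leT := fun x y : part => (y.1 < x.1)%N) _ p0 Hlt.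
  move=> /(_ _ k i) H; rewrite /psize neq_ltn H ?orbT //.
    by move=> a b c /= H1 H2; apply: ltn_trans H1.
  by rewrite inE (ltn_trans Hki).
rewrite Hk Ho /=.
by case: (all _ s); case: (size s == m).
Qed.

Lemma seqs_of_size A n s : s \in seqs_of A n -> size s = n.
Proof.
elim: n s => [|n IH] s /=; first by rewrite inE => /eqP ->.
by case/allpairsP=> [[a u] [_ /= Hu ->]] /=; rewrite (IH _ Hu).
Qed.

Lemma mem_parts_upto J t b : ((t, b) \in parts_upto J) = (t <= J)%N.
Proof.
apply/idP/idP.
  case/allpairsP=> [[a c] [/= Ha _ [-> _]]].
  by move: Ha; rewrite -/(iota 0 J.+1) mem_iota add0n ltnS.
move=> H; apply: (allpairs_f (fun t b => (t, b))); first by rewrite mem_iota add0n ltnS H.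
by case: b.
Qed.

Lemma uniq_parts_upto J : uniq (parts_upto J).
Proof.
apply: allpairs_uniq; [exact: iota_uniq | by [] |].
by move=> [a b] [c d] _ _ /=.
Qed.

Definition S J c n t : {poly rat} :=
  \sum_(s <- seqs_of (parts_upto J) n |
         [&& inG n s, psize (nth p0 s 0) == t & last p0 s == c])
     'X^(weight s).

Lemma sum_pick (A : seq part) (p : part) (K : {poly rat}) :
  uniq A -> p \in A -> \sum_(a <- A) (if a == p then K else 0) = K.
Proof.
move=> uA pA; rewrite (bigD1_seq p) //= eqxx big1 ?addr0 //.
by move=> a /negbTE ->.
Qed.

Lemma seqs_ofS A n : seqs_of A n.+1 = [seq a :: s | a <- A, s <- seqs_of A n].
Proof. by []. Qed.

Lemma inG_cons n a y u : inG n.+2 (a :: y :: u) = stepR a y && inG n.+1 (y :: u).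
Proof.
rewrite !inGE /= -!andbA; case H: (stepR a y); last by rewrite !andbF.
by rewrite (leq_ltn_trans _ (@stepR_lt _ _ H)).
Qed.

Lemma S_rec J c n t : (t <= J)%N ->
  S J c n.+2 t = (if t is t'.+1 then 'X^t * S J c n.+1 t' else 0)
               + (if t is t'.+2 then 'X^t * S J c n.+1 t' else 0).
Proof.
move=> tJ; rewrite /S seqs_ofS.
set A := parts_upto J.
set L := seqs_of A n.+1.
rewrite big_mkcond big_allpairs_dep exchange_big.
pose P u t' := [&& inG n.+1 u, psize (nth p0 u 0) == t' & last p0 u == c].
have -> : ((if t is t'.+1 then 'X^t * \sum_(s <- L | P s t') 'X^(weight s) else 0)
   + (if t is t'.+2 then 'X^t * \sum_(s <- L | P s t') 'X^(weight s) else 0) : {poly rat})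
   = \sum_(u <- L) ((if t is t'.+1 then 'X^t * (if P u t' then 'X^(weight u) else 0) else 0)
        + (if t is t'.+2 then 'X^t * (if P u t' then 'X^(weight u) else 0) else 0)).
  rewrite big_split /=; congr (_ + _).
    case: t {tJ} => [|t]; [by rewrite big1 | by rewrite big_mkcond mulr_sumr].
  case: t {tJ} => [|[|t]]; [by rewrite big1 | by rewrite big1 | by rewrite big_mkcond mulr_sumr].
apply: eq_big_seq => u Hu; have := seqs_of_size _ _ _ Hu.
case: u Hu => [|y u] // _ _.
set Q := (if inG n.+1 (y :: u) && (last y u == c) then 'X^(weight (y :: u)) else 0 : {poly rat}).
pose K1 := (if y.1.+1 == t then 'X^(y.1.+1) else 0 : {poly rat}).
pose K2 := (if y.1.+2 == t then 'X^(y.1.+2) else 0 : {poly rat}).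
rewrite (eq_bigr (fun a => (if a == (y.1.+1, true) then K1 else 0) * Q
                         + (if a == (y.1.+2, false) then K2 else 0) * Q)); last first.
  move=> a _; rewrite inG_cons /stepR /Q /K1 /K2.
  have -> : weight [:: a, y & u] = (a.1 + weight (y :: u))%N by [].
  have ne12 : ((y.1.+1, true) == (y.1.+2, false)) = false by rewrite xpair_eqE andbF.
  case: (a =P (y.1.+1, true)) => [->|n1].
    rewrite ne12 /= mul0r addr0.
    by case: (inG _ _); case: (last y u == c); case: (_ == t); rewrite /= ?mul0r ?mulr0 ?mul1r ?exprD.
  case: (a =P (y.1.+2, false)) => [->|n2].
    rewrite /= mul0r add0r.
    by case: (inG _ _); case: (last y u == c); case: (_ == t); rewrite /= ?mul0r ?mulr0 ?mul1r ?exprD.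
  by rewrite /= !mul0r addr0.
have pick : forall (p : part) (K : {poly rat}), (K != 0 -> p \in A) ->
    \sum_(a <- A) (if a == p then K else 0) = K.
  move=> p K H; have [->|nK] := eqVneq K 0.
    by rewrite big1 // => a _; case: ifP.
  by apply: sum_pick; [exact: uniq_parts_upto | exact: H].
rewrite big_split /= -!mulr_suml !pick; first last.
- rewrite /K1; case: (y.1.+1 =P t) => [E _|_]; rewrite ?eqxx //.
  by rewrite mem_parts_upto E.
- rewrite /K2; case: (y.1.+2 =P t) => [E _|_]; rewrite ?eqxx //.
  by rewrite mem_parts_upto E.
rewrite /K1 /K2 /Q /P /psize /=.
clear K1 K2 pick.
case: (inG _ _); case: (last y u == c); rewrite /= ?andbT ?andbF ?mulr0 ?addr0;
  case: t {tJ} => [|[|t]] //=; rewrite ?eqSS ?andbF /= ?mul0r ?mulr0 ?addr0 //.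
- by case: eqP => [->|_]; rewrite ?mul0r ?mulr0.
- case: (y.1 =P t.+1) => [->|_].
    have -> : (t.+1 == t) = false by rewrite eqn_leq ltnn.
    by rewrite /= mul0r mulr0.

  by case: (y.1 =P t) => [->|_]; rewrite ?mul0r ?mulr0 ?add0r.
Qed.

Lemma S_one J b t : (1 <= J)%N -> S J (1%N, b) 1 t = if t == 1%N then 'X else 0.
Proof.
move=> J1; rewrite /S seqs_ofS big_mkcond big_allpairs_dep /=.
rewrite (eq_bigr (fun a => if a == (1%N, b) then (if t == 1%N then 'X else 0) else 0)).
  by apply: sum_pick; [exact: uniq_parts_upto | rewrite mem_parts_upto].
move=> a _; rewrite big_cons big_nil addr0 inGE /=.
case: (a =P (1%N, b)) => [->|ne] /=.
  by rewrite eq_sym; case: (t == 1%N); rewrite /= ?expr1.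
by rewrite !andbF.
Qed.

Lemma S_zero J b n t : (1 <= J)%N -> (1 <= n)%N -> (t < n)%N -> (t <= J)%N -> S J (1%N, b) n t = 0.
Proof.
move=> J1; elim: n t => [//|[|n] IH] t _ tn tJ.
  by rewrite S_one //; case: t tn tJ.
rewrite S_rec //; case: t tn tJ => [|[|t]] tn tJ //=.
  by rewrite addr0.
  by rewrite (IH 0%N) // mulr0 addr0.
rewrite (IH t.+1) ?(IH t) ?mulr0 ?addr0 //; lia.
Qed.

Fixpoint qb (M N : nat) : {poly rat} :=
  match M with
  | 0 => if N is 0 then 1 else 0
  | M'.+1 => if N is N'.+1 then 'X^N * qb M' N + qb M' N' else 1
  end.

Lemma qb0 M : qb M 0 = 1. Proof. by case: M. Qed.

Lemma S_closed J b k j : (k + j < J)%N ->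
  S J (1%N, b) k.+1 (k + j).+1 = 'X^('C(k.+2, 2) + 'C(j.+1, 2)) * qb k j.
Proof.
elim: k j => [|k IH] j kjJ.
  rewrite S_one; last by case: J kjJ.
  case: j kjJ => [|j] _ //=; last by rewrite mulr0.
  by rewrite mulr1 (_ : ('C(2,2) + 'C(1,2))%N = 1%N).
rewrite [(k.+1 + j)%N]addSn S_rec //= IH; last by lia.
case: j kjJ => [|j] kjJ.
  rewrite addn0 S_zero //; [|lia|lia].
  rewrite mulr0 addr0 !qb0 !mulr1 -exprD; congr ('X^_).
  rewrite (binS k.+2 1) bin1; lia.
rewrite addnS IH; last by lia.
rewrite /= mulrDr !mulrA -!exprD.
rewrite (binS k.+2 1) bin1 (binS j.+1 1) bin1.
congr ('X^_ * _ + 'X^_ * _); lia.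
Qed.

Lemma qpoch0 : qpoch 0 = 1.
Proof. by rewrite /qpoch big_geq. Qed.

Lemma qpochS n : qpoch n.+1 = qpoch n * (1 - 'X^(n.+1)).
Proof. by rewrite /qpoch big_nat_recr. Qed.

Lemma qpoch_neq0 n : qpoch n != 0.
Proof.
elim: n => [|n IH]; first by rewrite qpoch0 oner_eq0.
rewrite qpochS mulf_neq0 //; apply/eqP => E.
have := congr1 (fun p : {poly rat} => p.[0]) E.
by rewrite !hornerE expr0n /= subr0 => /eqP; rewrite oner_eq0.
Qed.

Lemma qb_big M N : (M < N)%N -> qb M N = 0.
Proof.
elim: M N => [|M IH] [|N] //= H.
by rewrite !IH ?mulr0 ?addr0 //; apply: ltnW.
Qed.

Lemma qb_prod M N : (N <= M)%N -> qb M N * (qpoch N * qpoch (M - N)) = qpoch M.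
Proof.
elim: M N => [|M IH] [|N] //= H.
- by rewrite qpoch0 !mul1r.
- by rewrite qpoch0 subn0 !mul1r.
rewrite subSS.
have [NM|NM] := ltnP N M; last first.
  have NeM : N = M by apply/eqP; rewrite eqn_leq NM andbT.
  subst N; rewrite qb_big // mulr0 add0r subnn qpoch0 mulr1 qpochS mulrA.
  by have := IH M (leqnn M); rewrite subnn qpoch0 mulr1 => ->.
have IH1 := IH N.+1 NM.
have IH2 := IH N (ltnW NM).
set d := (M - N.+1)%N in IH1.
have Md : (M - N)%N = d.+1 by rewrite /d subnSK.
have XM : 'X^(M.+1) = 'X^(N.+1) * 'X^(d.+1) :> {poly rat}.
  by rewrite -exprD /d; congr ('X^_); lia.
rewrite Md in IH2 *; rewrite qpochS in IH1 *; rewrite qpochS in IH2 *.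
rewrite qpochS XM.
set a := qb M N.+1 in IH1 *; set b := qb M N in IH2 *.
set x := 'X^(N.+1); set y := 'X^(d.+1).
transitivity (x * (1 - y) * (a * (qpoch N * (1 - x) * qpoch d))
   + (1 - x) * (b * (qpoch N * (qpoch d * (1 - y))))); first by ring.
by rewrite IH1 IH2; ring.
Qed.

Lemma qb_gauss M N : toRF (qb M N) = gauss M N.
Proof.
rewrite /gauss; case: leqP => H; last by rewrite qb_big // /toRF tofrac0.
rewrite -(qb_prod _ _ H) /toRF tofracM mulfK //.
by rewrite tofrac_eq0 mulf_neq0 // qpoch_neq0.
Qed.

Theorem mainTheorem16 (m j : nat) : (1 <= m)%N ->
  toRF (bG m (m + j) (1%N, false))
    = toRF ('X^('C(m.+1, 2) + 'C(j.+1, 2))) * gauss (m - 1) j /\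
  toRF (bG m (m + j) (1%N, true))
    = toRF ('X^('C(m.+1, 2) + 'C(j.+1, 2))) * gauss (m - 1) j.
Proof.
case: m => [//|k] _.
have E b : bG k.+1 (k.+1 + j) (1%N, b) = 'X^('C(k.+2, 2) + 'C(j.+1, 2)) * qb k j.
  change (S (k.+1 + j) (1%N, b) k.+1 (k.+1 + j) = 'X^('C(k.+2, 2) + 'C(j.+1, 2)) * qb k j).
  by rewrite [(k.+1 + j)%N]addSn S_closed.
by rewrite !E subn1 /= -(qb_gauss k j) /toRF !tofracM.
Qed.
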